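(* Let $k\ge 1$ and $\rho\ge 0$ be integers. Every connected graph $G=(V,E)$ with at least $k$ vertices and $\mathrm{tb}_k(G)\leq\rho$ has a balanced $\mathbf{D_\rho^k}$-separator, i.e., there exist $k$ distinct vertices $v_1,\dots,v_k$ such that every connected component of $G[V\setminus \bigcup_{j=1}^k D_\rho(v_j,G)]$ has at most $|V|/2$ vertices.
   Context: Graphs are finite, connected, unweighted, undirected and simple; $d_G$ is the shortest-path distance, $D_r(v,G)=\{u: d_G(u,v)\le r\}$, and $G[S]$ is the subgraph induced by $S$. A tree-decomposition of $G=(V,E)$ is a pair $(\{X_i\mid i\in I\},T=(I,F))$ with $T$ a tree and bags $X_i\subseteq V$ such that (1) $\bigcup_i X_i=V$; (2) every edge lies in some bag; (3) for each $v\in V$ the nodes $i$ with $v\in X_i$ induce a connected subtree of $T$. The $k$-breadth of a tree-decomposition is the minimum integer $r$ such that each bag $X_i$ is covered by at most $k$ disks of $G$ of radius $r$, i.e., there are vertices $v^i_1,\dots,v^i_k$ of $G$ with $X_i\subseteq D_r(v^i_1,G)\cup\dots\cup D_r(v^i_k,G)$. The $k$-tree-breadth $\mathrm{tb}_k(G)$ is the minimum $k$-breadth over all tree-decompositions of $G$. *)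

(* Defs.v *)
From mathcomp Require Import all_boot.
Set Implicit Arguments. Unset Strict Implicit. Unset Printing Implicit Defensive.

Definition simple_graph (T : finType) (e : rel T) : Prop :=
  symmetric e /\ irreflexive e.

Definition connected_graph (T : finType) (e : rel T) : Prop :=
  forall x y : T, connect e x y.

Definition induced (T : finType) (e : rel T) (S : {set T}) : rel T :=
  [rel x y | [&& x \in S, y \in S & e x y]].

Definition dist_le (T : finType) (e : rel T) (r : nat) (u v : T) : bool :=
  [exists n : 'I_r.+1, [exists p : n.-tuple T, path e u p && (last u p == v)]].

Definition disk (T : finType) (e : rel T) (r : nat) (v : T) : {set T} :=
  [set u | dist_le e r v u].

Definition is_tree (I : finType) (F : rel I) : Prop :=
  simple_graph F /\ connected_graph F /\
  forall c : seq I, ~~ [&& cycle F c, uniq c & 2 < size c].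

Definition tree_decomposition (T : finType) (e : rel T)
  (I : finType) (F : rel I) (X : I -> {set T}) : Prop :=
  [/\ is_tree F,
      (forall v : T, exists i, v \in X i),
      (forall u v : T, e u v -> exists i, (u \in X i) && (v \in X i)) &
      (forall v : T, forall i j : I, v \in X i -> v \in X j ->
          connect (induced F [set l | v \in X l]) i j)].

Definition k_breadth_le (T : finType) (e : rel T) (k r : nat)
  (I : finType) (X : I -> {set T}) : Prop :=
  forall i : I, exists c : 'I_k -> T,
    X i \subset \bigcup_(j < k) disk e r (c j).

Definition tree_breadth_le (T : finType) (e : rel T) (k r : nat) : Prop :=
  exists (I : finType) (F : rel I) (X : I -> {set T}),
    tree_decomposition e F X /\ k_breadth_le e k r X.

Definition balanced_remainder (T : finType) (e : rel T) (S : {set T}) : Prop :=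
  forall x : T, x \in S ->
    2 * #|[set y in S | connect (induced e S) x y]| <= #|T|.

(* Main.v *)
Require Import Defs.
From mathcomp Require Import all_boot zify.
From Stdlib Require Import Classical.
Set Implicit Arguments. Unset Strict Implicit. Unset Printing Implicit Defensive.

Definition conn (I : finType) (F : rel I) (S : {set I}) :=
  forall a b, a \in S -> b \in S -> connect (induced F S) a b.

Arguments induced T e S /.

Lemma induced_sub (I : finType) (F : rel I) (A B : {set I}) a b :
  A \subset B -> connect (induced F A) a b -> connect (induced F B) a b.
Proof.
move=> AB; apply: connect_sub => x y /and3P[xA yA Fxy].
by apply: connect1; rewrite /induced /= Fxy !(subsetP AB).
Qed.

Lemma no_leaf (I : finType) (F : rel I) (U : {set I}) :
  symmetric F -> irreflexive F ->
  (forall c : seq I, ~~ [&& cycle F c, uniq c & 2 < size c]) ->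
  U != set0 ->
  (forall l, l \in U -> exists y y', [/\ y \in U, y' \in U, F l y, F l y' & y != y']) ->
  False.
Proof.
move=> Fs Fi Fc /set0Pn[x0 x0U] H.
have ext: forall m, exists x p, [/\ size p = m, uniq (x :: p), all (mem U) (x :: p) & path F x p].
  elim=> [|m [x [p [sz up aU pa]]]].
    by exists x0, [::]; rewrite /= x0U.
  have xU : x \in U by move: aU => /andP[].
  have [y [y' [yU y'U Fxy Fxy' yy']]] := H x xU.
  have [w [wU Fxw wz]] : exists w, [/\ w \in U, F x w & forall z q, p = z :: q -> w != z].
    case: (p) => [|z q]; first by exists y; split.
    case: (eqVneq y z) => [yz|yz].
      by exists y'; split=> // _ _ [<- _]; rewrite -yz eq_sym.
    by exists y; split=> // _ _ [<- _].
  have [wIn|wNin] := boolP (w \in x :: p).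
    exfalso.
    move: wIn; rewrite in_cons => /orP[/eqP wx|wp]; first by rewrite wx Fi in Fxw.
    case: p wz sz up aU pa wp => [//|z q] wz _ up aU pa.
    rewrite in_cons => /orP[/eqP wzz|wq]; first by move: (wz z q erefl); rewrite wzz eqxx.
    case/splitPr: wq up pa => q1 q2 up pa.
    apply: (negP (Fc (x :: z :: rcons q1 w))); apply/and3P; split.
    - move: pa; rewrite /= cat_path /= => /andP[-> /andP[p1 /andP[Fl _]]].
      by rewrite rcons_path rcons_path last_rcons p1 Fl Fs Fxw.
    - have E : x :: z :: q1 ++ w :: q2 = (x :: z :: rcons q1 w) ++ q2
        by rewrite /= -cats1 -catA.
      by move: up; rewrite E cat_uniq => /and3P[].
    - by rewrite /= size_rcons.
  exists w, (x :: p); split.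
  - by rewrite /= sz.
  - by rewrite cons_uniq wNin up.
  - by rewrite /= wU; move: aU => /= ->.
  - by rewrite /= Fs Fxw pa.
have [x [p [sz up _ _]]] := ext #|I|.
move: (max_card (mem (x :: p))); rewrite (card_uniqP up) /= sz ltnn //.
Qed.

Lemma leaf_remove (I : finType) (F : rel I) (A : {set I}) l :
  symmetric F -> l \in A ->
  (forall y y', y \in A -> y' \in A -> F l y -> F l y' -> y = y') ->
  conn F A -> conn F (A :\ l).
Proof.
move=> Fs lA leaf cA a b; rewrite !inE => /andP[al aA] /andP[bl bA].
move: (cA a b aA bA) => /connectP[p0 pa0 bE]; subst b.
move: bl bA; case: (shortenP pa0) => p pa up _ bl bA.
have lp : l \notin p.
  apply/negP => lp; case/splitPr: lp pa up bl => p1 p2 pa up.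
  rewrite last_cat /=; case: p2 pa up => [|z q] pa up; first by rewrite eqxx.
  move=> _; move: pa; rewrite cat_path /= => /andP[_ /andP[/and3P[yA _ Fyl] /andP[/and3P[_ zA Flz] _]]].
  have yz := leaf _ _ yA zA (etrans (Fs _ _) Fyl) Flz.
  move: up; rewrite -cat_cons cat_uniq => /and3P[_ /hasPn H _].
  have zin : z \in l :: z :: q by rewrite !in_cons eqxx orbT.
  by move: (H z zin); rewrite -yz (mem_last a p1).
apply/connectP; exists p => //.
clear pa0 bA bl; elim: p a al aA pa lp {up} => [|z q IH] a al aA //=.
move=> /andP[/and3P[_ zA Faz] pq]; rewrite in_cons negb_or eq_sym => /andP[zl lq].
by rewrite !inE al aA zl zA Faz /= IH.
Qed.

Lemma helly (I J : finType) (F : rel I) (j0 : J) :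
  symmetric F -> irreflexive F ->
  (forall c : seq I, ~~ [&& cycle F c, uniq c & 2 < size c]) ->
  forall n (U : {set I}) (S : J -> {set I}), #|U| <= n ->
  (forall j, S j \subset U) -> (forall j, S j != set0) -> (forall j, conn F (S j)) ->
  (forall j j', S j :&: S j' != set0) -> exists x, forall j, x \in S j.
Proof.
move=> Fs Fi Fc; elim=> [|n IH] U S Un SU Sn Sc Sp.
  exfalso; move: (Sn j0) => /set0Pn[a aS].
  move: Un; rewrite leqn0 cards_eq0 => /eqP U0.
  by move: (subsetP (SU j0) a aS); rewrite U0 inE.
have U0 : U != set0.
  move: (Sn j0) => /set0Pn[a aS]; apply/set0Pn; exists a; exact: (subsetP (SU j0)).
have [[l [lU leaf]] | noleaf] := classic (exists l, l \in U /\
    forall y y', y \in U -> y' \in U -> F l y -> F l y' -> y = y'); last first.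
  exfalso; apply: (no_leaf Fs Fi Fc U0) => l lU.
  apply: NNPP => Hn; apply: noleaf; exists l; split=> // y y' yU y'U Fy Fy'.
  apply/eqP; apply: contraT => ne; by case: Hn; exists y, y'.
have [[j Sj] | nosing] := classic (exists j, S j = [set l]).
  exists l => j'; move: (Sp j j'); rewrite Sj => /set0Pn[a].
  by rewrite inE => /andP[]; rewrite inE => /eqP->.
have S'n : forall j, S j :\ l != set0.
  move=> j; apply: contraT; rewrite negbK setD_eq0 subset1 => /orP[/eqP E|/eqP E].
  - by exfalso; apply: nosing; exists j.
  - by move: (Sn j); rewrite E eqxx.
have step : forall j, l \in S j -> exists z, [/\ z \in S j, z != l & F l z].
  move=> j lS; move: (S'n j) => /set0Pn[b]; rewrite !inE => /andP[bl bS].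
  move: (Sc j l b lS bS) => /connectP[p pa bE].
  case: p pa bE => [|z q] /=; first by move=> _ E; rewrite E eqxx in bl.
  move=> /andP[/and3P[_ zS Flz] _] _; exists z; split=> //.
  by apply: contraTneq Flz => ->; rewrite Fi.
suff [x Hx] : exists x, forall j, x \in S j :\ l.
  by exists x => j; move: (Hx j); rewrite inE => /andP[].
apply: (IH (U :\ l)) => //.
- by move: Un; rewrite (cardsD1 l U) lU add1n ltnS.
- by move=> j; apply: setSD (SU j).
- move=> j; case: (boolP (l \in S j)) => lS.
    apply: leaf_remove => //.
    by move=> y y' yS y'S; apply: leaf; apply: (subsetP (SU j)).
  have -> : S j :\ l = S j.
    apply/setP => y; rewrite !inE; case: eqP => // ->; by rewrite (negbTE lS).
  exact: Sc.
- move=> j j'; move: (Sp j j') => /set0Pn[a]; rewrite inE => /andP[aj aj'].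
  case: (eqVneq a l) => [al|al].
    subst a; have [z [zS zl Flz]] := step j aj; have [z' [zS' zl' Flz']] := step j' aj'.
    have zz := leaf _ _ (subsetP (SU j) _ zS) (subsetP (SU j') _ zS') Flz Flz'.
    by apply/set0Pn; exists z; rewrite !inE zl zS /=; subst z'.
  by apply/set0Pn; exists a; rewrite !inE al aj aj'.
Qed.

Lemma balanced_mono (T : finType) (e : rel T) (A B : {set T}) :
  A \subset B -> balanced_remainder e B -> balanced_remainder e A.
Proof.
move=> AB bB x xA; apply: leq_trans (bB x (subsetP AB x xA)).
rewrite leq_mul2l; apply/orP; right; apply: subset_leq_card.
apply/subsetP => y; rewrite !in_set => /andP[yA c]; rewrite (subsetP AB) //=.
exact: induced_sub c.
Qed.

Lemma induced_sym (T : finType) (e : rel T) (A : {set T}) :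
  symmetric e -> symmetric (induced e A).
Proof. by move=> es x y /=; rewrite es andbCA. Qed.

Lemma balanced_bag (T : finType) (e : rel T) (I : finType) (F : rel I)
  (X : I -> {set T}) (t0 : T) :
  symmetric e -> tree_decomposition e F X -> exists i, balanced_remainder e (~: X i).
Proof.
move=> es [[[Fs Fi] [_ Fc]] cov edg sub].
apply: NNPP => nb.
have big : forall i, exists x, (x \in ~: X i) &&
    (#|T| < 2 * #|[set y in ~: X i | connect (induced e (~: X i)) x y]|).
  move=> i; apply: NNPP => H; apply: nb; exists i => x xW; rewrite leqNgt.
  by apply/negP => lt; apply: H; exists x; rewrite xW lt.
have [xf xfP] := fin_all_exists big.
pose C i := [set y in ~: X i | connect (induced e (~: X i)) (xf i) y].
pose S i := [set l | [exists y, (y \in C i) && (y \in X l)]].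
have sv : forall (y : T) (W : {set I}) l l', y \in X l -> y \in X l' ->
    (forall m, y \in X m -> m \in W) -> connect (induced F W) l l'.
  move=> y W l l' yl yl' H; apply: induced_sub (sub y l l' yl yl').
  by apply/subsetP => m; rewrite inE; exact: H.
have Cconn : forall i p y, y \in C i -> path (induced e (~: X i)) y p ->
    forall l l', y \in X l -> last y p \in X l' -> connect (induced F (S i)) l l'.
  move=> i; elim=> [|z q IH] y yC /=.
    move=> _ l l' yl yl'; apply: (sv y) => // m ym; rewrite inE.
    by apply/existsP; exists y; rewrite yC ym.
  move=> /andP[/and3P[yW zW eyz] pq] l l' yl ql'.
  have zC : z \in C i.
    rewrite in_set zW /=; move: yC; rewrite in_set => /andP[_ cy].
    by apply: connect_trans cy (connect1 _); rewrite /= yW zW eyz.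
  have [m /andP[ym zm]] := edg y z eyz.
  apply: connect_trans (IH z zC pq m l' zm ql').
  apply: (sv y) => // m' ym'; rewrite inE; apply/existsP; exists y; by rewrite yC ym'.
have SC : forall i, conn F (S i).
  move=> i a b; rewrite !in_set => /existsP[ya /andP[yaC ya_a]] /existsP[yb /andP[ybC yb_b]].
  have : connect (induced e (~: X i)) ya yb.
    move: (yaC) (ybC); rewrite !in_set => /andP[_ c1] /andP[_ c2].
    apply: connect_trans c2; by rewrite (sym_connect_sym (@induced_sym _ e (~: X i) es)).
  move/connectP=> [p pa E]; apply: (Cconn i p ya yaC pa) => //; by rewrite -E.
have Cbig : forall i, #|T| < 2 * #|C i| by move=> i; case/andP: (xfP i).
have xfC : forall i, xf i \in C i.
  by move=> i; rewrite in_set connect0 andbT; case/andP: (xfP i).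
have Sn : forall i, S i != set0.
  move=> i; have [l xl] := cov (xf i); apply/set0Pn; exists l; rewrite in_set.
  by apply/existsP; exists (xf i); rewrite xfC.
have Sp : forall i j, S i :&: S j != set0.
  move=> i j.
  have : C i :&: C j != set0.
    rewrite -card_gt0; have := cardsUI (C i) (C j); have := max_card (C i :|: C j).
    have := Cbig i; have := Cbig j; lia.
  case/set0Pn => w; rewrite in_setI => /andP[wi wj].
  have [l wl] := cov w; apply/set0Pn; exists l; rewrite in_setI !in_set.
  by apply/andP; split; apply/existsP; exists w; rewrite ?wi ?wj wl.
have notin : forall i, i \notin S i.
  move=> i; rewrite in_set; apply/existsP => -[y /andP[]].
  by rewrite in_set in_setC => /andP[yn _] yi; rewrite yi in yn.
have [j0 _] := cov t0.
have [x Hx] := @helly I I F j0 Fs Fi Fc #|I| setT S (max_card _)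
  (fun j => subsetT _) Sn SC Sp.
by move: (notin x); rewrite Hx.
Qed.

Lemma extend_set (T : finType) (A : {set T}) m :
  #|A| <= m -> m <= #|T| -> exists B : {set T}, A \subset B /\ #|B| = m.
Proof.
elim: m => [|m IH] Am mT.
  by move: Am; rewrite leqn0 cards_eq0 => /eqP ->; exists set0; rewrite cards0.
case: (ltngtP #|A| m.+1) => [lt|gt|eq]; last 2 first.
- by move: Am; rewrite leqNgt gt.
- by exists A; split.
have [B [AB Bm]] := IH lt (ltnW mT).
have : 0 < #|~: B| by have := cardsC B; lia.
rewrite card_gt0 => /set0Pn[x]; rewrite in_setC => xB.
exists (x |: B); split; first exact: subset_trans AB (subsetU1 x B).
by rewrite cardsU1 xB Bm.
Qed.

Theorem lemma10 (k rho : nat) (T : finType) (e : rel T) :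
  1 <= k ->
  simple_graph e -> connected_graph e ->
  k <= #|T| ->
  tree_breadth_le e k rho ->
  exists c : 'I_k -> T, injective c /\
    balanced_remainder e (~: \bigcup_(j < k) disk e rho (c j)).
Proof.
move=> k1 [es ei] _ kT [I [F [X [td br]]]].
have [t0 _] : exists t : T, true.
  by case/card_gt0P: (leq_trans k1 kT) => t _; exists t.
have [i bi] := balanced_bag t0 es td.
have [c Xc] := br i.
have cA : #|[set c j | j : 'I_k]| <= k.
  by rewrite (leq_trans (leq_imset_card _ _)) // card_ord.
have [B [cB Bk]] := @extend_set T [set c j | j : 'I_k] k cA kT.
exists (fun j => enum_val (cast_ord (esym Bk) j)); split.
  by move=> j1 j2 /enum_val_inj /cast_ord_inj.
apply: balanced_mono bi; rewrite setCS; apply: subset_trans Xc _.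
apply/subsetP => u /bigcupP[j _ uj].
have cjB : c j \in B by apply: (subsetP cB); apply: imset_f.
apply/bigcupP; exists (cast_ord Bk (enum_rank_in cjB (c j))) => //.
by rewrite cast_ordK enum_rankK_in.
Qed.
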